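(* Let $p$ be a prime and $d,u$ positive integers with $u\ge2$ if $p=2$. Let $\Gamma=\mathrm{CS}(u,d,p)$ and $\Gamma_i=\mathrm{CS}(u+i-1,d,p)$ for $i\ge1$. For each positive integer $i$ set $\Gamma_i^*=\Gamma_{\lceil \log_p i\rceil+1}$. Then $\{\Gamma_i^*\}_{i\ge1}$ is an $N_p$-sequence for $\Gamma$; that is, $\Gamma=\Gamma_1^*\supseteq\Gamma_2^*\supseteq\cdots$ are normal subgroups of $\Gamma$ with $[\Gamma_i^*,\Gamma_j^*]\subseteq\Gamma_{i+j}^*$ and $(\Gamma_i^* )^p\subseteq \Gamma_{ip}^*$ for all $i,j\ge1$.
   Context: $\mathrm{CS}(i,d,p)=\{A\in \mathrm{Mat}_d(\mathbb{Z}_p)\mid A\equiv I_d \bmod p^i\}$ with $\mathbb{Z}_p$ the $p$-adic integers. $\lceil x\rceil$ is the least integer $\ge x$. For subgroups $A,B$, $[A,B]=\langle aba^{-1}b^{-1}\mid a\in A,b\in B\rangle$, and $A^p=\langle a^p\mid a\in A\rangle$. *)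

(* Defs.v *)
From HB Require Import structures.
From mathcomp Require Import all_boot all_order all_algebra.
From mathcomp Require Import boolp classical_sets.
Set Implicit Arguments. Unset Strict Implicit. Unset Printing Implicit Defensive.
Import Order.TTheory GRing.Theory Num.Theory.
Local Open Scope ring_scope.

(* The ring Z_p of p-adic integers, as the inverse limit of Z/p^(n+1)Z:     *)
(* a p-adic integer is a sequence (x_n) of integers with x_n in [0,p^(n+1)) *)
(* (normalised residues) and x_(n+1) = x_n mod p^(n+1).                     *)
(* To get a nontrivial ring for every p we use the base b = max(p,2)        *)
(* (as MathComp's 'Z_p does); in the statement p is prime so b = p.        *)


Lemma modz_mulmod (x a c : int) : modz (modz x (c * a)) a = modz x a.
Proof.
rewrite [in RHS](divz_eq x (c * a)) mulrA.
by rewrite modzMDl.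
Qed.

Section PAdic.
Variable p : nat.

Definition padic_base : nat := p.-2.+2.
Definition pmod (n : nat) : int := (padic_base ^ n.+1)%:Z.

Lemma pmodS n : pmod n.+1 = (padic_base%:Z) * pmod n.
Proof. by rewrite /pmod expnS PoszM. Qed.

Lemma pmod_neq0 n : pmod n != 0.
Proof. by rewrite /pmod eqz_nat expn_eq0 /padic_base. Qed.

Record padic := Padic {
  padic_seq : nat -> int;
  padic_seqP : forall n, modz (padic_seq n) (pmod n) = padic_seq n /\
                         modz (padic_seq n.+1) (pmod n) = padic_seq n }.

Lemma padic_ext (x y : padic) : padic_seq x =1 padic_seq y -> x = y.
Proof.
case: x => f fP; case: y => g gP /= /funext efg; subst g.
by rewrite (Prop_irrelevance fP gP).
Qed.

HB.instance Definition _ := gen_eqMixin padic.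
HB.instance Definition _ := gen_choiceMixin padic.


Definition compat (f : nat -> int) :=
  forall n, modz (f n.+1) (pmod n) = modz (f n) (pmod n).

Lemma mk_padicP (f : nat -> int) (fc : compat f) n :
  modz (modz (f n) (pmod n)) (pmod n) = modz (f n) (pmod n) /\
  modz (modz (f n.+1) (pmod n.+1)) (pmod n) = modz (f n) (pmod n).
Proof. by rewrite modz_mod pmodS modz_mulmod fc. Qed.

Definition mk_padic f (fc : compat f) : padic := Padic (mk_padicP fc).

Lemma padic_mod (x : padic) n : modz (padic_seq x n) (pmod n) = padic_seq x n.
Proof. by case: (padic_seqP x n). Qed.

Lemma padic_compat (x : padic) : compat (padic_seq x).
Proof. by move=> n; case: (padic_seqP x n) => -> ->. Qed.

Lemma const_compat (c : int) : compat (fun=> c).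
Proof. by []. Qed.

Lemma add_compat (x y : padic) :
  compat (fun n => padic_seq x n + padic_seq y n).
Proof.
move=> n; rewrite -modzDm (padic_compat x) (padic_compat y).
by rewrite modzDm.
Qed.

Lemma mul_compat (x y : padic) :
  compat (fun n => padic_seq x n * padic_seq y n).
Proof.
move=> n; rewrite -modzMm (padic_compat x) (padic_compat y).
by rewrite modzMm.
Qed.

Lemma opp_compat (x : padic) : compat (fun n => - padic_seq x n).
Proof.
by move=> n; rewrite -modzNm (padic_compat x) modzNm.
Qed.

Definition padic0 := mk_padic (const_compat 0).
Definition padic1 := mk_padic (const_compat 1).
Definition padic_add x y := mk_padic (add_compat x y).
Definition padic_mul x y := mk_padic (mul_compat x y).
Definition padic_opp x := mk_padic (opp_compat x).

Lemma padic_addA : associative padic_add.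
Proof.
move=> x y z; apply: padic_ext => n /=.
by rewrite modzDml modzDmr addrA.
Qed.

Lemma padic_addC : commutative padic_add.
Proof. by move=> x y; apply: padic_ext => n /=; rewrite addrC. Qed.

Lemma padic_add0 : left_id padic0 padic_add.
Proof.
by move=> x; apply: padic_ext => n /=; rewrite modzDml add0r padic_mod.
Qed.

Lemma padic_addN : left_inverse padic0 padic_opp padic_add.
Proof.
by move=> x; apply: padic_ext => n /=; rewrite modzDml addNr.
Qed.

HB.instance Definition _ := GRing.isZmodule.Build padic
  padic_addA padic_addC padic_add0 padic_addN.

Lemma padic_mulA : associative padic_mul.
Proof.
move=> x y z; apply: padic_ext => n /=.
by rewrite modzMml modzMmr mulrA.
Qed.

Lemma padic_mulC : commutative padic_mul.
Proof. by move=> x y; apply: padic_ext => n /=; rewrite mulrC. Qed.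

Lemma padic_mul1 : left_id padic1 padic_mul.
Proof.
by move=> x; apply: padic_ext => n /=; rewrite modzMml mul1r padic_mod.
Qed.

Lemma padic_mulDl : left_distributive padic_mul padic_add.
Proof.
move=> x y z; apply: padic_ext => n /=.
by rewrite modzMml modzDm mulrDl.
Qed.

Lemma padic1_neq0 : padic1 != padic0.
Proof.
apply/eqP => /(congr1 (fun x => padic_seq x 0)) /=.
have lt1 : (1 < pmod 0)%R by rewrite /pmod /padic_base expn1 ltz_nat.
by rewrite modz_small ?lt1 // modz_small ?lt1 // => /eqP; rewrite oner_eq0.
Qed.

HB.instance Definition _ := GRing.Zmodule_isComNzRing.Build padic
  padic_mulA padic_mulC padic_mul1 padic_mulDl padic1_neq0.

(* Units and inverses, defined classically (the inverse is any two-sided  *)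
(* inverse, chosen by the choice axiom; it is unique in a ring).          *)
Definition padic_unit : {pred padic} :=
  fun x => `[< exists y : padic, (y * x = 1)%R >].
Definition padic_inv (x : padic) : padic :=
  match pselect (exists y : padic, (y * x = 1)%R) with
  | left e => projT1 (cid e)
  | right _ => x
  end.

Lemma padic_mulVx : {in padic_unit, left_inverse 1%R padic_inv *%R}.
Proof.
move=> x /asboolP ux; rewrite /padic_inv.
case: pselect => // e; exact: (projT2 (cid e)).
Qed.

Lemma padic_unitPl (x y : padic) : (y * x = 1)%R -> padic_unit x.
Proof. by move=> e; apply/asboolP; exists y. Qed.

Lemma padic_inv_out : {in [predC padic_unit], padic_inv =1 id}.
Proof.
move=> x; rewrite inE /= => /asboolPn nx; rewrite /padic_inv.
by case: pselect.
Qed.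

HB.instance Definition _ := GRing.ComNzRing_hasMulInverse.Build padic
  padic_mulVx padic_unitPl padic_inv_out.

End PAdic.

Local Open Scope classical_set_scope.

Definition padic_dvd (p i : nat) (x : padic p) : Prop :=
  exists y : padic p, x = ((p ^ i)%N)%:R * y.

Arguments padic_dvd : clear implicits.
Definition CS (i d p : nat) : set 'M[padic p]_d :=
  [set A | forall j k : 'I_d, @padic_dvd p i ((A - 1%:M) j k)].

Section Groups.
Variables (p d : nat).
Local Notation M := 'M[padic p]_d.

Definition is_subgroup (H : set M) : Prop :=
  [/\ H 1%:M,
      (forall a b, H a -> H b -> H (a *m b)) &
      (forall a, H a -> a \in unitmx /\ H (invmx a))].

Definition gen_subgroup (S : set M) : set M :=
  [set x | forall H, is_subgroup H -> S `<=` H -> H x].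

Definition mx_commutator (a b : M) : M := a *m b *m invmx a *m invmx b.

Definition commutator_subgroup (A B : set M) : set M :=
  gen_subgroup [set c | exists a b, [/\ A a, B b & c = mx_commutator a b]].

Definition power_subgroup (n : nat) (A : set M) : set M :=
  gen_subgroup [set c | exists a, A a /\ c = iter n (mulmx a) 1%:M].

Definition normal_subgroup (N G : set M) : Prop :=
  [/\ is_subgroup N, N `<=` G &
      (forall g n, G g -> N n -> N (g *m n *m invmx g))].

End Groups.
Arguments CS i d p : clear implicits.

(* Main.v *)
Require Import Defs.
From HB Require Import structures.
From mathcomp Require Import all_boot all_order all_algebra.
From mathcomp Require Import boolp classical_sets.
Local Open Scope classical_set_scope.
From mathcomp Require Import ring zify.

Module Helpers.
Set Implicit Arguments. Unset Strict Implicit. Unset Printing Implicit Defensive.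
Import GRing.Theory.
Local Open Scope ring_scope.

Section P.
Variable p : nat.
Hypothesis hp : prime p.
Local Notation pdvd := (padic_dvd p).

Lemma pdvd0 n : pdvd n 0.
Proof. by exists 0; rewrite mulr0. Qed.
Lemma pdvdD n x y : pdvd n x -> pdvd n y -> pdvd n (x + y).
Proof. by move=> [a ->] [b ->]; exists (a + b); rewrite mulrDr. Qed.
Lemma pdvdN n x : pdvd n x -> pdvd n (- x).
Proof. by move=> [a ->]; exists (- a); rewrite mulrN. Qed.
Lemma pdvdB n x y : pdvd n x -> pdvd n y -> pdvd n (x - y).
Proof. by move=> hx hy; apply: pdvdD => //; apply: pdvdN. Qed.
Lemma pdvdMl n x y : pdvd n y -> pdvd n (x * y).
Proof. by move=> [a ->]; exists (x * a); rewrite mulrCA. Qed.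
Lemma pdvdMr n x y : pdvd n x -> pdvd n (x * y).
Proof. by move=> hx; rewrite mulrC; apply: pdvdMl. Qed.
Lemma pdvdM m n x y : pdvd m x -> pdvd n y -> pdvd (m + n) (x * y).
Proof.
by move=> [a ->] [b ->]; exists (a * b); rewrite expnD natrM; ring.
Qed.
Lemma pdvd_le m n x : (m <= n)%N -> pdvd n x -> pdvd m x.
Proof.
move=> le [a ->]; exists ((p ^ (n - m))%:R * a).
by rewrite -(subnKC le) expnD natrM subnKC // mulrA.
Qed.
Lemma pdvd_muln n x : pdvd n x -> pdvd n.+1 (x *+ p).
Proof.
by move=> [a ->]; exists a; rewrite expnSr natrM -mulr_natr; ring.
Qed.
Lemma pdvdX n x : pdvd 1 x -> pdvd n (x ^+ n).
Proof.
move=> h; elim: n => [|n IH]; first by exists 1; rewrite expr0 expn0 mulr1.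
by rewrite exprS -add1n; apply: pdvdM.
Qed.

Lemma baseE : padic_base p = p.
Proof. by rewrite /padic_base; case: p hp => [|[|q]]. Qed.

Lemma seq_dvd0 n x : pdvd n.+1 x -> padic_seq x n = 0.
Proof.
move=> [a ->].
have -> : padic_seq ((p ^ n.+1)%:R * a) n =
  modz (padic_seq ((p ^ n.+1)%:R : padic p) n * padic_seq a n) (pmod p n) by [].
suff -> : padic_seq ((p ^ n.+1)%:R : padic p) n = 0 by rewrite mul0r mod0z.
have gen : forall k, padic_seq (k%:R : padic p) n = modz k (pmod p n).
  elim=> [|k IH]; first by [].
  rewrite mulrS.
  have -> : padic_seq (1 + k%:R : padic p) n =
     modz (padic_seq (1 : padic p) n + padic_seq (k%:R : padic p) n) (pmod p n) by [].
  have -> : padic_seq (1 : padic p) n = modz 1 (pmod p n) by [].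
  by rewrite IH modzDm -addn1 PoszD addrC.
by rewrite gen /pmod baseE modzz.
Qed.

Lemma seq_cong n x y : pdvd n.+1 (x - y) -> padic_seq x n = padic_seq y n.
Proof.
move=> h; have -> : x = y + (x - y) by rewrite addrC subrK.
have -> : padic_seq (y + (x - y)) n =
  modz (padic_seq y n + padic_seq (x - y) n) (pmod p n) by [].
by rewrite (seq_dvd0 h) addr0 padic_mod.
Qed.

Lemma unit1p (x : padic p) : pdvd 1 (x - 1) -> x \is a GRing.unit.
Proof.
move=> hx; set q := 1 - x.
have hq : pdvd 1 q by rewrite /q -opprB; apply: pdvdN.
pose s n := \sum_(i < n.+1) q ^+ i.
have xs : forall n, x * s n = 1 - q ^+ n.+1.
  move=> n; have := subrX1 q n.+1; rewrite -/(s n) => e.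
  have -> : x = - (q - 1) by rewrite /q; ring.
  by rewrite mulNr -e opprB.
pose f n := padic_seq (s n) n.
have fc : compat p f.
  move=> n; rewrite /f (padic_compat (s n.+1) n) !padic_mod.
  apply: seq_cong; rewrite /s big_ord_recr /= addrAC subrr add0r.
  exact: pdvdX.
pose w := mk_padic fc.
apply/unitrP; exists w.
suff e : x * w = 1 by rewrite mulrC e.
apply: padic_ext => n.
have -> : padic_seq (x * w) n = modz (padic_seq x n * modz (f n) (pmod p n)) (pmod p n) by [].
rewrite modzMmr.
have -> : modz (padic_seq x n * f n) (pmod p n) = padic_seq (x * s n) n by [].
apply: seq_cong; rewrite xs addrC addKr; apply: pdvdN; exact: pdvdX.
Qed.
End P.

Local Open Scope classical_set_scope.

Section M.
Variables (p d : nat).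
Hypothesis hp : prime p.
Local Notation pdvd := (padic_dvd p).
Local Notation M := 'M[padic p]_d.
Definition mdvd n (A : M) := forall i j, pdvd n (A i j).

Lemma mdvd0 n : mdvd n 0.
Proof. by move=> i j; rewrite mxE; apply: pdvd0. Qed.
Lemma mdvdD n A B : mdvd n A -> mdvd n B -> mdvd n (A + B).
Proof. by move=> hA hB i j; rewrite mxE; apply: pdvdD. Qed.
Lemma mdvdN n A : mdvd n A -> mdvd n (- A).
Proof. by move=> hA i j; rewrite mxE; apply: pdvdN. Qed.
Lemma mdvdB n A B : mdvd n A -> mdvd n B -> mdvd n (A - B).
Proof. by move=> hA hB; apply: mdvdD => //; apply: mdvdN. Qed.
Lemma mdvdMl n A B : mdvd n B -> mdvd n (A *m B).
Proof.
move=> hB i j; rewrite mxE; apply: (big_ind (pdvd n)); [exact: pdvd0|exact: pdvdD|].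
by move=> k _; apply: pdvdMl.
Qed.
Lemma mdvdMr n A B : mdvd n A -> mdvd n (A *m B).
Proof.
move=> hA i j; rewrite mxE; apply: (big_ind (pdvd n)); [exact: pdvd0|exact: pdvdD|].
by move=> k _; apply: pdvdMr.
Qed.
Lemma mdvdM m n A B : mdvd m A -> mdvd n B -> mdvd (m + n) (A *m B).
Proof.
move=> hA hB i j; rewrite mxE; apply: (big_ind (pdvd (m + n))); [exact: pdvd0|exact: pdvdD|].
by move=> k _; apply: pdvdM.
Qed.
Lemma mdvd_le m n A : (m <= n)%N -> mdvd n A -> mdvd m A.
Proof. by move=> le hA i j; apply: pdvd_le le _. Qed.
Lemma mdvd_muln n A : mdvd n A -> mdvd n.+1 (A *+ p).
Proof. by move=> hA i j; rewrite mulmxnE; apply: pdvd_muln. Qed.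
Lemma mdvd_mulnk n k A : mdvd n A -> mdvd n (A *+ k).
Proof. by move=> hA i j; rewrite mulmxnE -mulr_natl; apply: pdvdMl. Qed.

Lemma det_cong n (A B : M) : mdvd n (A - B) -> pdvd n (\det A - \det B).
Proof.
move=> h; rewrite /determinant.
apply: (big_ind2 (fun a b => pdvd n (a - b))).
- by rewrite subrr; apply: pdvd0.
- move=> x1 x2 y1 y2 h1 h2.
  have -> : x1 + y1 - (x2 + y2) = (x1 - x2) + (y1 - y2) by ring.
  exact: pdvdD.
move=> s _; rewrite -mulrBr; apply: pdvdMl.
apply: (big_ind2 (fun a b => pdvd n (a - b))).
- by rewrite subrr; apply: pdvd0.
- move=> x1 x2 y1 y2 h1 h2.
  have -> : x1 * y1 - x2 * y2 = (x1 - x2) * y1 + x2 * (y1 - y2) by ring.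
  by apply: pdvdD; [apply: pdvdMr|apply: pdvdMl].
move=> i _; set j := (X in A i X); have := h i j; by rewrite !mxE.
Qed.

Lemma CS_sub n : (0 < n)%N -> is_subgroup (CS n d p).
Proof.
move=> n0; split.
- by rewrite /CS /= subrr; apply: mdvd0.
- move=> a b ha hb; rewrite /CS /=.
  have -> : a *m b - 1%:M = (a - 1%:M) *m b + (b - 1%:M).
    by rewrite mulmxBl mul1mx addrA subrK.
  by apply: mdvdD => //; apply: mdvdMr.
move=> a ha.
have ua : a \in unitmx.
  rewrite unitmxE; apply: (unit1p hp).
  by apply: (pdvd_le n0); have := det_cong ha; rewrite det1.
split => //; rewrite /CS /=.
have -> : invmx a - 1%:M = - ((a - 1%:M) *m invmx a).
  by rewrite mulmxBl mul1mx mulmxV // opprB.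
by apply: mdvdN; apply: mdvdMr.
Qed.

Lemma CS_le m n : (m <= n)%N -> CS n d p `<=` CS m d p.
Proof. by move=> le A hA; apply: (mdvd_le le). Qed.

Lemma gen_le (S H : set M) : is_subgroup H -> S `<=` H -> gen_subgroup S `<=` H.
Proof. by move=> sH SH x; apply. Qed.

Lemma zid (V : zmodType) (x y a b e : V) : x - a + e - b + a - e + b - y = x - y.
Proof.
congr (_ - _).
rewrite (addrAC _ (-b)) (addrAC _ (-b)) subrK.
rewrite (addrAC _ e) (addrAC _ e) subrK.
by rewrite subrK.
Qed.

Lemma comm_id (A B : M) :
  A *m B - B *m A = (A - 1%:M) *m (B - 1%:M) - (B - 1%:M) *m (A - 1%:M).
Proof.
rewrite !mulmxBl !mulmxBr !mul1mx !mulmx1.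
by rewrite !opprB !addrA zid.
Qed.

Lemma comm_CS m n a b : (0 < m)%N -> (0 < n)%N -> CS m d p a -> CS n d p b ->
  CS (m + n) d p (mx_commutator a b).
Proof.
move=> m0 n0 ha hb.
have [_ _ /(_ a ha) [ua _]] := CS_sub m0.
have [_ _ /(_ b hb) [ub _]] := CS_sub n0.
rewrite /CS /= /mx_commutator.
have -> : a *m b *m invmx a *m invmx b - 1%:M =
   (a *m b - b *m a) *m invmx a *m invmx b.
  rewrite !mulmxBl -(mulmxA b a) mulmxV // mulmx1 mulmxV //.
rewrite comm_id; apply: mdvdMr; apply: mdvdMr.
apply: mdvdB; first exact: mdvdM.
by rewrite addnC; apply: mdvdM.
Qed.

Lemma zid2 (V : zmodType) (Q X Z W : V) (o : V) :
  Q - (o + (X + W)) = Q - ((X + Z) + (o + W)) + Z.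
Proof.
rewrite (addrC X Z) -(addrA Z) (opprD Z) [in RHS]addrA (addrAC Q) subrK.
by congr (_ - _); rewrite addrCA.
Qed.

Lemma pow_aux n (X : M) : mdvd n X -> forall k,
  mdvd (n + n) (iter k (mulmx (X + 1%:M)) 1%:M - (1%:M + X *+ k)).
Proof.
move=> hX; elim=> [|k IH] /=.
  by rewrite mulr0n addr0 subrr; apply: mdvd0.
set P := iter k _ _.
have -> : (X + 1%:M) *m P - (1%:M + X *+ k.+1) =
  (X + 1%:M) *m (P - (1%:M + X *+ k)) + X *m (X *+ k).
  rewrite mulmxBr; set Q := (X + 1%:M) *m P.
  rewrite mulmxDl mulmxDr mulmx1 mul1mx mulrS.
  exact: zid2.
apply: mdvdD; first exact: mdvdMl.
by apply: mdvdM => //; apply: mdvd_mulnk.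
Qed.

Lemma pow_CS n a : (0 < n)%N -> CS n d p a -> CS n.+1 d p (iter p (mulmx a) 1%:M).
Proof.
move=> n0 ha; rewrite /CS /=.
have := pow_aux ha p; rewrite (subrK 1%:M a) => h.
have -> : iter p (mulmx a) 1%:M - 1%:M =
   (iter p (mulmx a) 1%:M - (1%:M + (a - 1%:M) *+ p)) + (a - 1%:M) *+ p.
  by rewrite opprD addrA (subrK ((a - 1%:M) *+ p)).
apply: mdvdD; last exact: mdvd_muln.
by apply: mdvd_le h; rewrite -addn1 leq_add2l.
Qed.
End M.

End Helpers.
Import Helpers.

Theorem lemma3p1 (p d u : nat) :
  prime p -> (0 < d)%N -> (0 < u)%N -> (p = 2%N -> (2 <= u)%N) ->
  let Gamma := CS u d p in
  let GammaS := fun i : nat => CS (u + (up_log p i).+1 - 1) d p in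
  [/\ GammaS 1%N = Gamma,
      (forall i, (0 < i)%N -> GammaS i.+1 `<=` GammaS i),
      (forall i, (0 < i)%N -> normal_subgroup (GammaS i) Gamma),
      (forall i j, (0 < i)%N -> (0 < j)%N ->
         commutator_subgroup (GammaS i) (GammaS j) `<=` GammaS (i + j)%N) &
      (forall i, (0 < i)%N -> power_subgroup p (GammaS i) `<=` GammaS (i * p)%N)].
Proof.
move=> hp _ u0 _ Gamma GammaS.
have p1 : (1 < p)%N by apply: prime_gt1.
have GE : forall i, GammaS i = CS (u + up_log p i) d p.
  by move=> i; rewrite /GammaS addnS subn1.
have sub : forall i, is_subgroup (GammaS i).
  by move=> i; rewrite GE; apply: CS_sub => //; rewrite addn_gt0 u0.
split.
- by rewrite GE up_log1 addn0.
- move=> i _; rewrite !GE; apply: CS_le; rewrite leq_add2l.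
  by apply: leq_up_log.
- move=> i _; split; first exact: sub.
  + by rewrite GE; apply: CS_le; rewrite leq_addr.
  move=> g x hg hx.
  have [_ _ /(_ g hg) [ug _]] := CS_sub d hp u0.
  move: hx; rewrite GE /CS /= => hx.
  have -> : (g *m x *m invmx g - 1%:M = g *m (x - 1%:M) *m invmx g)%R.
    by rewrite mulmxBr mulmx1 mulmxBl mulmxV.
  by apply: mdvdMr; apply: mdvdMl.
- move=> i j i0 j0; apply: gen_le; first exact: sub.
  move=> c [a [b [ha hb ->]]].
  move: ha hb; rewrite !GE => ha hb.
  have := comm_CS hp _ _ ha hb; rewrite !addn_gt0 u0 => /(_ isT isT).
  apply: CS_le.
  have : (up_log p (i + j) <= (up_log p i + up_log p j).+1)%N.
    apply: up_log_min => //.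
    have hi := up_logP i p1; have hj := up_logP j p1.
    have a1 : (0 < p ^ up_log p i)%N by rewrite expn_gt0 ltnW.
    have b1 : (0 < p ^ up_log p j)%N by rewrite expn_gt0 ltnW.
    rewrite expnS expnD.
    move: hi hj a1 b1 p1; set a0 := p ^ up_log p i; set b0 := p ^ up_log p j => hi hj a1 b1 p2.
    clearbody a0 b0.
    have h2 : (a0 + b0 <= 2 * (a0 * b0))%N by nia.
    have h3 : (2 * (a0 * b0) <= p * (a0 * b0))%N by rewrite leq_mul2r p2 orbT.
    lia.
  lia.
- move=> i i0; apply: gen_le; first exact: sub.
  move=> c [a [ha ->]]; move: ha; rewrite !GE => ha.
  rewrite mulnC up_logMp // addnS.
  by apply: pow_CS => //; rewrite addn_gt0 u0.
Qed.
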